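(* Given any $\lambda\in(0,1)$, $\epsilon_p\in(0,1)$, $H>0$ and any constants $c_1,c_2\ge4$, there exists a set of MDPs $\mathcal M=\{m_1,m_2\}$ with horizon $H$ that is $\lambda$-separable but is not well-separated.
   Context: MDPs are tabular with common state and action spaces; $P_i(s,a)=P_i(\cdot\mid s,a)$. $\mathcal M$ is $\lambda$-separable if for every $i\ne j$ there exists $(s,a)$ with $\|P_i(s,a)-P_j(s,a)\|_1\ge\lambda$. Well-separated (entropy-based separation): let $\Pi$ be the class of all history-dependent, possibly non-Markovian policies, and for $\pi\in\Pi$ let $\tau\sim(m,\pi)$ be a length-$H$ trajectory sampled from MDP $m$ under $\pi$, with $\Pr_{m,\pi}(\tau)$ its probability. $\mathcal M$ (with $M=|\mathcal M|$) is well-separated (with parameters $\epsilon_p,c_1,c_2$) if for all $m,m'\in\mathcal M$ with $m'\ne m$ and all $\pi\in\Pi$, \[ \Pr_{\tau\sim(m,\pi)}\Big(\frac{\Pr_{m',\pi}(\tau)}{\Pr_{m,\pi}(\tau)}>(\epsilon_p/M)^{c_1}\Big)<(\epsilon_p/M)^{c_2}. \] *)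

(* Defs.v *)
From HB Require Import structures.
From mathcomp Require Import all_boot all_order all_algebra.
From mathcomp Require Import reals exp.
Set Implicit Arguments. Unset Strict Implicit. Unset Printing Implicit Defensive.
Import Order.TTheory GRing.Theory Num.Theory.
Local Open Scope ring_scope.

Section MDP.
Variables (R : realType) (S A : finType).

Definition is_distr (T : finType) (p : T -> R) :=
  (forall x, 0 <= p x) /\ \sum_(x : T) p x = 1.

Record mdp := MDP {
  init : S -> R;
  trans : S -> A -> S -> R;
  init_distr : is_distr init;
  trans_distr : forall s a, is_distr (trans s a) }.

Definition l1_trans (m1 m2 : mdp) (s : S) (a : A) : R :=
  \sum_(s' : S) `| trans m1 s a s' - trans m2 s a s' |.

Definition separable (M : nat) (lam : R) (ms : 'I_M -> mdp) :=
  forall i j : 'I_M, i != j ->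
    exists s a, lam <= l1_trans (ms i) (ms j) s a.

(* history-dependent (non-Markovian), possibly randomized policy:
   given the past state-action pairs and the current state,
   a distribution over actions *)
Definition policy := seq (S * A) -> S -> A -> R.
Definition is_policy (pi : policy) := forall h s, is_distr (pi h s).

(* probability of the remaining steps [rest] of a trajectory, given the
   history [hist] and the last state-action pair [prev] *)
Fixpoint traj_prob_aux (m : mdp) (pi : policy) (hist : seq (S * A))
    (prev : S * A) (rest : seq (S * A)) : R :=
  match rest with
  | [::] => 1
  | sa :: r =>
      trans m prev.1 prev.2 sa.1 * pi (rcons hist prev) sa.1 sa.2 *
      traj_prob_aux m pi (rcons hist prev) sa r
  end.

Definition traj_prob (m : mdp) (pi : policy) (tau : seq (S * A)) : R :=
  match tau with
  | [::] => 1
  | sa :: r => init m sa.1 * pi [::] sa.1 sa.2 * traj_prob_aux m pi [::] sa r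
  end.

Definition prob_ratio_gt (H : nat) (m m' : mdp) (pi : policy) (thr : R) : R :=
  \sum_(tau : H.-tuple (S * A) |
          thr < traj_prob m' pi tau / traj_prob m pi tau)
     traj_prob m pi tau.

Definition well_separated (H M : nat) (eps c1 c2 : R) (ms : 'I_M -> mdp) :=
  forall i j : 'I_M, i != j -> forall pi : policy, is_policy pi ->
    prob_ratio_gt H (ms i) (ms j) pi (powR (eps / M%:R) c1)
      < powR (eps / M%:R) c2.

End MDP.

(* Main.v *)
Require Import Defs.
From HB Require Import structures.
From mathcomp Require Import all_boot all_order all_algebra.
From mathcomp Require Import reals exp lra.
Import Order.TTheory GRing.Theory Num.Theory.
Local Open Scope ring_scope.

Section Aux.
Variable R : realType.

Definition ini (s : bool) : R := (~~ s)%:R.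
Definition tr1 (s : bool) (a : unit) (s' : bool) : R := (~~ s')%:R.
Definition tr2 (s : bool) (a : unit) (s' : bool) : R := (s' == s)%:R.

Lemma ini_d : is_distr ini.
Proof. split; first by case. by rewrite big_bool /ini /= add0r. Qed.
Lemma tr1_d s a : is_distr (tr1 s a).
Proof. split; first by case. by rewrite big_bool /tr1 /= add0r. Qed.
Lemma tr2_d s a : is_distr (tr2 s a).
Proof. split; first by case. by case: s; rewrite big_bool /tr2 /= ?add0r ?addr0. Qed.

Definition m1 := MDP ini_d tr1_d.
Definition m2 := MDP ini_d tr2_d.

Definition pol : policy R bool unit := fun _ _ _ => 1.

Lemma pol_ok : is_policy pol.
Proof. move=> h s; split => //; by rewrite big_const card_unit /= addr0. Qed.

Lemma aux_one (m : mdp R bool unit) : trans m false tt false = 1 ->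
  forall n hist, traj_prob_aux m pol hist (false, tt) (nseq n (false, tt)) = 1.
Proof.
move=> Hm; elim=> [|n IH] hist //=.
by rewrite Hm (IH _) /pol !mulr1.
Qed.

Lemma tp_one (m : mdp R bool unit) : init m false = 1 -> trans m false tt false = 1 ->
  forall n, traj_prob m pol (nseq n (false, tt)) = 1.
Proof.
move=> Hi Ht [|n] //=. by rewrite Hi (aux_one _ Ht) /pol !mulr1.
Qed.

Lemma aux_ge0 (m : mdp R bool unit) :
  forall r hist prev, 0 <= traj_prob_aux m pol hist prev r.
Proof.
elim=> [|sa r IH] hist prev //=.
rewrite /pol mulr1; apply: mulr_ge0 => //.
by case: (trans_distr m prev.1 prev.2) => ->.
Qed.

Lemma tp_ge0 (m : mdp R bool unit) tau : 0 <= traj_prob m pol tau.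
Proof.
case: tau => [|sa r] //=. rewrite /pol mulr1; apply: mulr_ge0; last exact: aux_ge0.
by case: (init_distr m) => ->.
Qed.

End Aux.

Theorem lemma6 (R : realType) (lam eps c1 c2 : R) (H : nat) :
  0 < lam < 1 -> 0 < eps < 1 -> (0 < H)%N -> 4 <= c1 -> 4 <= c2 ->
  exists (S A : finType) (ms : 'I_2 -> mdp R S A),
    separable lam ms /\ ~ well_separated H eps c1 c2 ms.
Proof.
move=> /andP[l0 l1] /andP[e0 e1] H0 hc1 hc2.
exists bool, unit, (fun i : 'I_2 => if i == ord0 then m1 R else m2 R).
have Hl : lam <= l1_trans (m1 R) (m2 R) true tt.
  rewrite /l1_trans big_bool /= /tr1 /tr2 /=.
  rewrite subr0 sub0r normrN normr1; lra.
have Hl' : lam <= l1_trans (m2 R) (m1 R) true tt.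
  rewrite /l1_trans big_bool /= /tr1 /tr2 /=.
  rewrite subr0 sub0r normrN normr1; lra.
split.
  move=> i j Hij; exists true, tt.
  have [i0|i1] : i = ord0 \/ i = Ordinal (isT : (1 < 2)%N).
    by case: i {Hij} => [[|[|i]] Hi] //; [left|right]; apply: val_inj.
  - have -> : j = Ordinal (isT : (1 < 2)%N).
      move: Hij; rewrite i0; case: j => [[|[|j]] Hj] //= _; exact: val_inj.
    by rewrite i0 /=.
  - have -> : j = ord0.
      move: Hij; rewrite i1; case: j => [[|[|j]] Hj] //= _; exact: val_inj.
    by rewrite i1 /=.
move=> W.
have Hne : (ord0 : 'I_2) != (@Ordinal 2 1 isT) by [].
have h2 : prob_ratio_gt H (m1 R) (m2 R) (pol R) (powR (eps / 2%:R) c1)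
    < powR (eps / 2%:R) c2 := W _ _ Hne _ (pol_ok R).
have a0 : 0 < eps / 2%:R by rewrite divr_gt0.
have a1 : eps / 2%:R <= 1 by rewrite ler_pdivrMr // mul1r; lra.
have p1 : powR (eps / 2%:R) c1 < 1.
  apply: (le_lt_trans (ge1r_powR _ _)); first by rewrite a0 a1.
    lra.
  rewrite ltr_pdivrMr // mul1r; lra.
have p2 : powR (eps / 2%:R) c2 <= 1.
  apply: (le_trans (ge1r_powR _ _)) => //; first by rewrite a0 a1.
  lra.
set tau0 : H.-tuple (bool * unit) := nseq_tuple H (false, tt).
have T1 : traj_prob (m1 R) (pol R) tau0 = 1 by apply: tp_one.
have T2 : traj_prob (m2 R) (pol R) tau0 = 1 by apply: tp_one.
have : 1 <= prob_ratio_gt H (m1 R) (m2 R) (pol R) (powR (eps / 2%:R) c1).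
  rewrite /prob_ratio_gt (bigD1 tau0); last first.
    by rewrite T1 T2 divr1.
  rewrite T1 lerDl; apply: sumr_ge0 => t _; exact: tp_ge0.
move=> h1; have := lt_le_trans (le_lt_trans h1 h2) p2; by rewrite ltxx.
Qed.
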